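(* Assume the standing assumptions and additionally that every $\sigma_l$ is differentiable everywhere, and let $\Omega=\Omega_{out}$ with $\lambda>0$, $1\le p<\infty$. Then for every $B\in\mathbb{R}$, the set of dimension tuples $\mathbf{d}=(d_1,\dots,d_{L-1})$ for which there exists a proper $B$-local minimum $(\mathbf{d},\mathbf{W})$ of $E$ is bounded.
   Context: Network: for dimensions $d_0,\dots,d_L$ and weights $\mathbf{W}=(W_1,\dots,W_L)$, $W_l\in\mathbb{R}^{d_{l-1}\times d_l}$, define for a row vector $x\in\mathbb{R}^{d_0}$: $x_0=x$, $z_l=x_{l-1}W_l$, $x_l=\sigma_l.(z_l)$ (elementwise), $f(\mathbf{W},x)=x_L$; $d_0,d_L$ are fixed and $d_1,\dots,d_{L-1}$ vary. $E(\mathbf{d},\mathbf{W})=\frac{1}{|D|}\sum_{(x,y)\in D}e(f(\mathbf{W},x),y)+\Omega(\mathbf{W},\lambda,p)$ with $D$ a finite dataset of pairs $(x,y)$, $x\in\mathbb{R}^{d_0}$, $y\in Y$. $\Omega_{in}(\mathbf{W},\lambda,p)=\lambda\sum_{l=1}^L\sum_{j=1}^{d_l}\|(W_l(i,j))_{i}\|_p$, $\Omega_{out}(\mathbf{W},\lambda,p)=\lambda\sum_{l=1}^L\sum_{i=1}^{d_{l-1}}\|(W_l(i,j))_{j}\|_p$. Standing assumptions: each $\sigma_l$ is left- and right-differentiable everywhere, and there are functions $b_{1,l},b_{2,l}:\mathbb{R}_{\ge0}\to\mathbb{R}_{\ge0}$ with $|\sigma_l(s)|\le b_{1,l}(S)|s|$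 and $|\sigma_l^{\leftarrow}(s)|,|\sigma_l^{\rightarrow}(s)|\le b_{2,l}(S)$ whenever $|s|\le S$; $e$ is nonnegative, differentiable in its first argument, and there is $b_3$ with $e(v,y)\le S\Rightarrow\|\partial e(v,y)/\partial v\|_\infty\le b_3(S)$. Definitions: The fan-in of hidden unit $j$ in layer $l$ ($1\le l\le L-1$) is column $j$ of $W_l$; its fan-out is row $j$ of $W_{l+1}$. A pair $(\mathbf{d},\mathbf{W})$ is a local minimum of $E$ if $\mathbf{W}$ is a local minimum of $E(\mathbf{d},\cdot)$ with $\mathbf{d}$ fixed; it is $B$-locally minimal if moreover $E(\mathbf{d},\mathbf{W})\le B$. The proper dimensionality of $\mathbf{W}$ is the dimension tuple obtained by deleting all hidden units whose fan-in or fan-out (or both) is the zero vector; $(\mathbf{d},\mathbf{W})$ is proper if $\mathbf{d}$ equals the proper dimensionality of $\mathbf{W}$. A proper $B$-local minimum is a $B$-locally minimal local minimum that is proper. *)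

(* Defs.v *)
From Stdlib Require Import Reals List Arith.
Open Scope R_scope.

(** Vectors in R^n are represented as [nat -> R], only indices [< n] matter. *)

Fixpoint sumR (n : nat) (f : nat -> R) : R :=
  match n with O => 0 | S m => sumR m f + f m end.

Fixpoint maxabs (n : nat) (h : nat -> R) : R :=
  match n with O => 0 | S m => Rmax (maxabs m h) (Rabs (h m)) end.

Definition vec (n : nat) (v : nat -> R) : Prop := forall i, (n <= i)%nat -> v i = 0.

Definition rpow (x y : R) : R := if Rlt_dec 0 x then Rpower x y else 0.

Definition pnorm (n : nat) (p : R) (w : nat -> R) : R :=
  rpow (sumR n (fun j => rpow (Rabs (w j)) p)) (/ p).

Definition right_deriv (f : R -> R) (x a : R) : Prop :=
  forall eps, 0 < eps -> exists delta, 0 < delta /\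
    forall h, 0 < h < delta -> Rabs ((f (x + h) - f x) / h - a) < eps.
Definition left_deriv (f : R -> R) (x a : R) : Prop :=
  forall eps, 0 < eps -> exists delta, 0 < delta /\
    forall h, - delta < h < 0 -> Rabs ((f (x + h) - f x) / h - a) < eps.

Definition frechet (n : nat) (f : (nat -> R) -> R) (v g : nat -> R) : Prop :=
  forall eps, 0 < eps -> exists delta, 0 < delta /\
    forall h, vec n h -> maxabs n h < delta ->
      Rabs (f (fun i => v i + h i) - f v - sumR n (fun i => g i * h i))
        <= eps * maxabs n h.

(** Network.  d : nat -> nat gives d_0,...,d_L; W l i j = W_l(i,j) (1 <= l <= L);
    sigma l = sigma_l.  [fwd sigma d W x l] is x_l (padded with zeros). *)
Fixpoint fwd (sigma : nat -> R -> R) (d : nat -> nat) (W : nat -> nat -> nat -> R)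
  (x : nat -> R) (l : nat) : nat -> R :=
  match l with
  | O => fun i => if Nat.ltb i (d O) then x i else 0
  | S k => fun j => if Nat.ltb j (d (S k))
                    then sigma (S k) (sumR (d k) (fun i => fwd sigma d W x k i * W (S k) i j))
                    else 0
  end.

Definition netf (L : nat) (sigma : nat -> R -> R) (d : nat -> nat)
  (W : nat -> nat -> nat -> R) (x : nat -> R) : nat -> R := fwd sigma d W x L.

Definition Omega_out (L : nat) (d : nat -> nat) (W : nat -> nat -> nat -> R) (lam p : R) : R :=
  lam * sumR L (fun k => sumR (d k) (fun i => pnorm (d (S k)) p (fun j => W (S k) i j))).

Definition Eobj {Y : Type} (L : nat) (sigma : nat -> R -> R) (e : (nat -> R) -> Y -> R)
  (D : list ((nat -> R) * Y)) (lam p : R) (d : nat -> nat) (W : nat -> nat -> nat -> R) : R :=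
  / INR (length D) *
    fold_right (fun xy acc => e (netf L sigma d W (fst xy)) (snd xy) + acc) 0 D
  + Omega_out L d W lam p.

Definition local_min {Y : Type} (L : nat) (sigma : nat -> R -> R) (e : (nat -> R) -> Y -> R)
  (D : list ((nat -> R) * Y)) (lam p : R) (d : nat -> nat) (W : nat -> nat -> nat -> R) : Prop :=
  exists eps, 0 < eps /\
    forall W' : nat -> nat -> nat -> R,
      (forall l i j, (1 <= l <= L)%nat -> (i < d (l - 1))%nat -> (j < d l)%nat ->
         Rabs (W' l i j - W l i j) < eps) ->
      Eobj L sigma e D lam p d W <= Eobj L sigma e D lam p d W'.

(** Hidden unit j of layer l (1 <= l <= L-1) is deleted in the proper dimensionality
    iff its fan-in (column j of W_l) or fan-out (row j of W_{l+1}) is zero. *)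
Definition fan_in_zero (d : nat -> nat) (W : nat -> nat -> nat -> R) (l j : nat) : Prop :=
  forall i, (i < d (l - 1))%nat -> W l i j = 0.
Definition fan_out_zero (d : nat -> nat) (W : nat -> nat -> nat -> R) (l j : nat) : Prop :=
  forall k, (k < d (S l))%nat -> W (S l) j k = 0.
Definition deleted_unit (d : nat -> nat) (W : nat -> nat -> nat -> R) (l j : nat) : Prop :=
  fan_in_zero d W l j \/ fan_out_zero d W l j.

(** (d, W) is proper: d equals the proper dimensionality of W, i.e. no hidden unit
    is deleted. *)
Definition proper (L : nat) (d : nat -> nat) (W : nat -> nat -> nat -> R) : Prop :=
  forall l j, (1 <= l <= L - 1)%nat -> (j < d l)%nat -> ~ deleted_unit d W l j.

Definition proper_B_local_min {Y : Type} (L : nat) (sigma : nat -> R -> R)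
  (e : (nat -> R) -> Y -> R) (D : list ((nat -> R) * Y)) (lam p B : R)
  (d : nat -> nat) (W : nat -> nat -> nat -> R) : Prop :=
  local_min L sigma e D lam p d W /\ Eobj L sigma e D lam p d W <= B /\ proper L d W.

(* Main.v *)
Require Import Defs.
From Stdlib Require Import Reals List Arith Lra Lia Classical FunctionalExtensionality ZArith.
Open Scope R_scope.

Lemma sumR_ext n f g : (forall i, (i < n)%nat -> f i = g i) -> sumR n f = sumR n g.
Proof. induction n; simpl; intros H; [reflexivity|]. rewrite IHn by (intros; apply H; lia). rewrite H by lia. reflexivity. Qed.

Lemma sumR_le n f g : (forall i, (i < n)%nat -> f i <= g i) -> sumR n f <= sumR n g.
Proof. induction n; simpl; intros H; [lra|]. assert (f n <= g n) by (apply H; lia). assert (sumR n f <= sumR n g) by (apply IHn; intros; apply H; lia). lra. Qed.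

Lemma sumR_nonneg n f : (forall i, (i < n)%nat -> 0 <= f i) -> 0 <= sumR n f.
Proof. intros H. replace 0 with (sumR n (fun _ => 0)). apply sumR_le; auto. induction n; simpl; auto. rewrite IHn; [lra|]. intros; apply H; lia. Qed.

Lemma sumR_plus n f g : sumR n (fun i => f i + g i) = sumR n f + sumR n g.
Proof. induction n; simpl; [lra|]. rewrite IHn; lra. Qed.

Lemma sumR_scal n c f : sumR n (fun i => c * f i) = c * sumR n f.
Proof. induction n; simpl; [lra|]. rewrite IHn; lra. Qed.

Lemma sumR_const n c : sumR n (fun _ => c) = INR n * c.
Proof. induction n; simpl sumR; [simpl; lra|]. rewrite IHn, S_INR; lra. Qed.

Lemma sumR_abs n f : Rabs (sumR n f) <= sumR n (fun i => Rabs (f i)).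
Proof. induction n; simpl. rewrite Rabs_R0; lra. eapply Rle_trans; [apply Rabs_triang|]. lra. Qed.

Lemma sumR_ge_term n f j : (forall i, (i < n)%nat -> 0 <= f i) -> (j < n)%nat -> f j <= sumR n f.
Proof. induction n; simpl; intros H Hj; [lia|].
  destruct (Nat.eq_dec j n). subst. assert (0 <= sumR n f) by (apply sumR_nonneg; intros; apply H; lia). lra.
  assert (f j <= sumR n f) by (apply IHn; [intros; apply H; lia| lia]). assert (0 <= f n) by (apply H; lia). lra. Qed.

Lemma sumR_change1 n f f' j : (forall i, (i < n)%nat -> i <> j -> f' i = f i) -> (j < n)%nat ->
  sumR n f' = sumR n f + (f' j - f j).
Proof. induction n; simpl; intros H Hj; [lia|].
  destruct (Nat.eq_dec j n). subst. rewrite (sumR_ext n f' f). lra. intros; apply H; lia.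
  rewrite IHn; [| intros; apply H; lia | lia]. rewrite (H n) by lia. lra. Qed.

Lemma sumR_swap n m (f : nat -> nat -> R) :
  sumR n (fun j => sumR m (fun i => f i j)) = sumR m (fun i => sumR n (fun j => f i j)).
Proof. induction n; simpl. induction m; simpl; lra.
  rewrite IHn. rewrite <- sumR_plus. reflexivity. Qed.

Lemma maxabs_nonneg n h : 0 <= maxabs n h.
Proof. induction n; simpl; [lra|]. eapply Rle_trans; [apply IHn| apply Rmax_l]. Qed.

Lemma maxabs_ge n h i : (i < n)%nat -> Rabs (h i) <= maxabs n h.
Proof. induction n; simpl; intros; [lia|]. destruct (Nat.eq_dec i n). subst; apply Rmax_r.
  eapply Rle_trans; [apply IHn; lia| apply Rmax_l]. Qed.

Lemma maxabs_le n h c : 0 <= c -> (forall i, (i < n)%nat -> Rabs (h i) <= c) -> maxabs n h <= c.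
Proof. induction n; simpl; intros; [lra|]. apply Rmax_lub. apply IHn; auto. apply H0; lia. Qed.

Lemma sumR_prod_bound n g h : sumR n (fun i => g i * h i) <= INR n * maxabs n g * maxabs n h.
Proof.
  eapply Rle_trans. apply Rle_abs. eapply Rle_trans. apply sumR_abs.
  rewrite Rmult_assoc, <- sumR_const. apply sumR_le. intros i Hi. rewrite Rabs_mult.
  apply Rmult_le_compat; try apply Rabs_pos; apply maxabs_ge; auto. Qed.

Lemma rpow_nonneg x y : 0 <= rpow x y.
Proof. unfold rpow. destruct (Rlt_dec 0 x). unfold Rpower. left; apply exp_pos. lra. Qed.

Lemma rpow_pos x y : 0 < x -> 0 < rpow x y.
Proof. intros. unfold rpow. destruct (Rlt_dec 0 x); [|lra]. unfold Rpower. apply exp_pos. Qed.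

Lemma rpow_0 y : rpow 0 y = 0.
Proof. unfold rpow. destruct (Rlt_dec 0 0); lra. Qed.

Lemma rpow_le x y p : 0 <= x <= y -> 0 < p -> rpow x p <= rpow y p.
Proof. intros [H1 H2] Hp. destruct H1. unfold rpow. destruct (Rlt_dec 0 x); [|lra]. destruct (Rlt_dec 0 y); [|lra].
  apply Rle_Rpower_l; lra. subst. rewrite rpow_0. apply rpow_nonneg. Qed.

Lemma rpow_inv x p : 0 <= x -> 0 < p -> rpow (rpow x p) (/ p) = x.
Proof. intros Hx Hp. destruct Hx as [Hx|Hx]. 2:{ subst. rewrite !rpow_0. reflexivity. }
  unfold rpow at 2. destruct (Rlt_dec 0 x); [|lra]. unfold rpow. destruct (Rlt_dec 0 (Rpower x p)).
  rewrite Rpower_mult, Rinv_r, Rpower_1; lra. exfalso; apply n; unfold Rpower; apply exp_pos. Qed.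

Lemma rpow_inv' x p : 0 <= x -> 0 < p -> rpow (rpow x (/ p)) p = x.
Proof. intros Hx Hp. destruct Hx as [Hx|Hx]. 2:{ subst. rewrite !rpow_0. reflexivity. }
  unfold rpow at 2. destruct (Rlt_dec 0 x); [|lra]. unfold rpow. destruct (Rlt_dec 0 (Rpower x (/p))).
  rewrite Rpower_mult, Rinv_l, Rpower_1; lra. exfalso; apply n; unfold Rpower; apply exp_pos. Qed.

Lemma rpow_mult c x p : 0 < c -> 0 <= x -> rpow (c * x) p = rpow c p * rpow x p.
Proof. intros Hc Hx. destruct Hx as [Hx|Hx]. 2:{ subst. rewrite Rmult_0_r, !rpow_0. lra. }
  unfold rpow. destruct (Rlt_dec 0 (c*x)); [| exfalso; apply n; nra].
  destruct (Rlt_dec 0 c); [|lra]. destruct (Rlt_dec 0 x); [|lra]. rewrite Rpower_mult_distr; auto. Qed.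

Lemma pnorm_nonneg n p w : 0 <= pnorm n p w.
Proof. apply rpow_nonneg. Qed.

Lemma pnorm_pow n p w : 0 < p -> rpow (pnorm n p w) p = sumR n (fun j => rpow (Rabs (w j)) p).
Proof. intros. unfold pnorm. apply rpow_inv'; auto. apply sumR_nonneg; intros; apply rpow_nonneg. Qed.

Lemma pnorm_ge n p w j : (j < n)%nat -> 0 < p -> Rabs (w j) <= pnorm n p w.
Proof. intros Hj Hp. unfold pnorm. rewrite <- (rpow_inv (Rabs (w j)) p) at 1 by (auto; apply Rabs_pos).
  apply rpow_le. split. apply rpow_nonneg. apply (sumR_ge_term n (fun j => rpow (Rabs (w j)) p)); auto.
  intros; apply rpow_nonneg. apply Rinv_0_lt_compat; auto. Qed.

Lemma pnorm_scale n p w c : 0 < c -> 0 < p -> pnorm n p (fun j => c * w j) = c * pnorm n p w.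
Proof. intros Hc Hp. unfold pnorm.
  rewrite (sumR_ext n _ (fun j => rpow c p * rpow (Rabs (w j)) p)).
  2:{ intros. rewrite Rabs_mult, (Rabs_right c) by lra. apply rpow_mult; auto. apply Rabs_pos. }
  rewrite sumR_scal. rewrite rpow_mult. rewrite rpow_inv; lra.
  apply rpow_pos; auto. apply sumR_nonneg; intros; apply rpow_nonneg. Qed.

Lemma fwd_zero sigma d W x k j : (d k <= j)%nat -> fwd sigma d W x k j = 0.
Proof. intros H. destruct k; simpl; [destruct (Nat.ltb_spec j (d O))|destruct (Nat.ltb_spec j (d (S k)))]; auto; lia. Qed.

Lemma fwd_dep sigma d W W' x k : (forall m, (1 <= m <= k)%nat -> forall i j, W m i j = W' m i j) ->
  forall j, fwd sigma d W x k j = fwd sigma d W' x k j.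
Proof. induction k; intros H j; simpl; auto.
  destruct (Nat.ltb j (d (S k))); auto. f_equal. apply sumR_ext. intros i _.
  rewrite IHk by (intros; apply H; lia). rewrite H by lia. reflexivity. Qed.

Fixpoint Sb (b1 : nat -> R -> R) (X0 Bw : R) (k : nat) : R :=
  match k with O => X0 | S k => b1 (S k) (Sb b1 X0 Bw k * Bw) * (Sb b1 X0 Bw k * Bw) end.

Lemma Sb_nonneg b1 X0 Bw k : 0 <= X0 -> 0 <= Bw -> (forall l S, 0 <= S -> 0 <= b1 l S) -> 0 <= Sb b1 X0 Bw k.
Proof. intros. induction k; simpl; auto. assert (0 <= Sb b1 X0 Bw k * Bw) by nra.
  specialize (H1 (S k) _ H2). nra. Qed.

Definition colb (L : nat) (d : nat -> nat) (W : nat -> nat -> nat -> R) (Bw : R) : Prop :=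
  forall k, (S k <= L)%nat -> forall j, (j < d (S k))%nat -> sumR (d k) (fun i => Rabs (W (S k) i j)) <= Bw.

Lemma z_bound (d : nat -> nat) (xk : nat -> R) (W : nat -> nat -> nat -> R) k j Sk :
  (forall i, Rabs (xk i) <= Sk) ->
  Rabs (sumR (d k) (fun i => xk i * W (S k) i j)) <= Sk * sumR (d k) (fun i => Rabs (W (S k) i j)).
Proof. intros H. eapply Rle_trans. apply sumR_abs. rewrite <- sumR_scal. apply sumR_le. intros.
  rewrite Rabs_mult. apply Rmult_le_compat_r. apply Rabs_pos. auto. Qed.

Lemma fwd_bound L sigma b1 d W x X0 Bw
  (Hb1_nn : forall l S, 0 <= S -> 0 <= b1 l S)
  (Hb1 : forall l, (1 <= l <= L)%nat -> forall S s, 0 <= S -> Rabs s <= S ->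
           Rabs (sigma l s) <= b1 l S * Rabs s)
  (HX0 : 0 <= X0) (HBw : 0 <= Bw) (Hc : colb L d W Bw)
  (Hx : forall i, (i < d O)%nat -> Rabs (x i) <= X0) :
  forall k, (k <= L)%nat -> forall j, Rabs (fwd sigma d W x k j) <= Sb b1 X0 Bw k.
Proof. induction k; intros Hk j; simpl.
  - destruct (Nat.ltb_spec j (d O)). auto. rewrite Rabs_R0; auto.
  - destruct (Nat.ltb_spec j (d (S k))).
    2:{ rewrite Rabs_R0. apply (Sb_nonneg b1 X0 Bw (S k)); auto. }
    assert (HS := Sb_nonneg b1 X0 Bw k HX0 HBw Hb1_nn).
    assert (Hz : Rabs (sumR (d k) (fun i => fwd sigma d W x k i * W (S k) i j)) <= Sb b1 X0 Bw k * Bw).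
    { eapply Rle_trans. apply z_bound. intros; apply IHk; lia.
      apply Rmult_le_compat_l; [auto| apply Hc; auto]. }
    eapply Rle_trans. apply Hb1; [lia| |apply Hz]. nra. idtac.
    apply Rmult_le_compat_l; auto. apply Hb1_nn; nra. Qed.

Lemma Rabs_le_between' x T : Rabs x <= T -> -T <= x <= T.
Proof. unfold Rabs; destruct (Rcase_abs x); lra. Qed.

Lemma lipschitz f T K u v : derivable f -> (forall c a, Rabs c <= T -> right_deriv f c a -> Rabs a <= K) ->
  Rabs u <= T -> Rabs v <= T -> Rabs (f u - f v) <= K * Rabs (u - v).
Proof. intros pr HK Hu Hv.
  assert (Hd : forall c, Rabs c <= T -> Rabs (derive_pt f c (pr c)) <= K).
  { intros c Hc. apply (HK c); auto. intros eps Heps.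
    destruct (proj2_sig (pr c) eps Heps) as [del Hdel]. exists (pos del). split. apply cond_pos.
    intros h Hh. apply Hdel. lra. rewrite Rabs_right; lra. }
  destruct (Rtotal_order u v) as [Huv|[Huv|Huv]].
  - destruct (MVT_cor1 f u v pr Huv) as [c [Hc1 Hc2]].
    rewrite <- Rabs_Ropp, Ropp_minus_distr, Hc1, Rabs_mult, <- (Rabs_Ropp (u - v)), Ropp_minus_distr.
    apply Rmult_le_compat_r. apply Rabs_pos. apply Hd. apply Rabs_le. apply Rabs_le_between' in Hu. apply Rabs_le_between' in Hv. lra.
  - subst. replace (f v - f v) with 0 by ring. replace (v - v) with 0 by ring. rewrite Rabs_R0, Rmult_0_r. lra.
  - destruct (MVT_cor1 f v u pr Huv) as [c [Hc1 Hc2]]. rewrite Hc1, Rabs_mult.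
    apply Rmult_le_compat_r. apply Rabs_pos. apply Hd. apply Rabs_le. apply Rabs_le_between' in Hu. apply Rabs_le_between' in Hv. lra.
Qed.

Lemma sumR_minus n f g : sumR n f - sumR n g = sumR n (fun i => f i - g i).
Proof. induction n; simpl; [lra|]. rewrite <- IHn. lra. Qed.


Lemma prop_step L sigma b1 b2 d W W' x X0 Bw
  (Hb1_nn : forall l S, 0 <= S -> 0 <= b1 l S)
  (Hb2_nn : forall l S, 0 <= S -> 0 <= b2 l S)
  (Hb1 : forall l, (1 <= l <= L)%nat -> forall S s, 0 <= S -> Rabs s <= S ->
           Rabs (sigma l s) <= b1 l S * Rabs s)
  (Hb2 : forall l, (1 <= l <= L)%nat -> forall S s a, 0 <= S -> Rabs s <= S ->
           (left_deriv (sigma l) s a \/ right_deriv (sigma l) s a) -> Rabs a <= b2 l S)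
  (Hdiff : forall l, (1 <= l <= L)%nat -> derivable (sigma l))
  (HX0 : 0 <= X0) (HBw : 0 <= Bw) (Hc : colb L d W Bw) (Hc' : colb L d W' Bw)
  (Hx : forall i, (i < d O)%nat -> Rabs (x i) <= X0) k delta
  (Hk : (S k <= L)%nat) (Heq : forall i j, W' (S k) i j = W (S k) i j) (Hdel : 0 <= delta)
  (Hd : forall i, Rabs (fwd sigma d W' x k i - fwd sigma d W x k i) <= delta) :
  forall j, Rabs (fwd sigma d W' x (S k) j - fwd sigma d W x (S k) j)
     <= b2 (S k) (Sb b1 X0 Bw k * Bw) * (Bw * delta).
Proof.
  intros j. assert (HS := Sb_nonneg b1 X0 Bw k HX0 HBw Hb1_nn).
  assert (HT : 0 <= Sb b1 X0 Bw k * Bw) by nra.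
  assert (HK : 0 <= b2 (S k) (Sb b1 X0 Bw k * Bw)) by auto.
  simpl. destruct (Nat.ltb_spec j (d (S k))).
  2:{ replace (0 - 0) with 0 by ring. rewrite Rabs_R0. apply Rmult_le_pos; nra. }
  eapply Rle_trans. apply (lipschitz _ (Sb b1 X0 Bw k * Bw) (b2 (S k) (Sb b1 X0 Bw k * Bw))). apply Hdiff; lia.
  { intros c a Hc0 Hr. apply (Hb2 (S k) ltac:(lia) _ c a); auto. }
  - eapply Rle_trans. apply z_bound. intros; apply (fwd_bound L sigma b1 d W' x X0 Bw); auto; lia.
    apply Rmult_le_compat_l; auto.
  - eapply Rle_trans. apply z_bound. intros; apply (fwd_bound L sigma b1 d W x X0 Bw); auto; lia.
    apply Rmult_le_compat_l; auto.
  - apply Rmult_le_compat_l; auto. rewrite sumR_minus.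
    rewrite (sumR_ext _ _ (fun i => (fwd sigma d W' x k i - fwd sigma d W x k i) * W (S k) i j)).
    2:{ intros. rewrite Heq. ring. }
    eapply Rle_trans. apply z_bound. apply Hd. rewrite Rmult_comm. apply Rmult_le_compat_r; auto.
Qed.

Lemma prop_first L sigma b1 b2 d W W' x X0 Bw
  (Hb1_nn : forall l S, 0 <= S -> 0 <= b1 l S)
  (Hb2_nn : forall l S, 0 <= S -> 0 <= b2 l S)
  (Hb1 : forall l, (1 <= l <= L)%nat -> forall S s, 0 <= S -> Rabs s <= S ->
           Rabs (sigma l s) <= b1 l S * Rabs s)
  (Hb2 : forall l, (1 <= l <= L)%nat -> forall S s a, 0 <= S -> Rabs s <= S ->
           (left_deriv (sigma l) s a \/ right_deriv (sigma l) s a) -> Rabs a <= b2 l S)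
  (Hdiff : forall l, (1 <= l <= L)%nat -> derivable (sigma l))
  (HX0 : 0 <= X0) (HBw : 0 <= Bw) (Hc : colb L d W Bw) (Hc' : colb L d W' Bw)
  (Hx : forall i, (i < d O)%nat -> Rabs (x i) <= X0) k j0 t R
  (Hk : (S k <= L)%nat) (Hj0 : (j0 < d k)%nat) (Ht : 0 <= t)
  (Heq : forall i j, i <> j0 -> W' (S k) i j = W (S k) i j)
  (Hrow : forall j, W' (S k) j0 j = (1 - t) * W (S k) j0 j)
  (HR0 : 0 <= R) (HR : forall j, (j < d (S k))%nat -> Rabs (W (S k) j0 j) <= R)
  (Hsame : forall i, fwd sigma d W' x k i = fwd sigma d W x k i) :
  forall j, Rabs (fwd sigma d W' x (S k) j - fwd sigma d W x (S k) j)
     <= b2 (S k) (Sb b1 X0 Bw k * Bw) * (t * Rabs (fwd sigma d W x k j0) * R).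
Proof.
  intros j. assert (HS := Sb_nonneg b1 X0 Bw k HX0 HBw Hb1_nn).
  assert (HT : 0 <= Sb b1 X0 Bw k * Bw) by nra.
  assert (HK : 0 <= b2 (S k) (Sb b1 X0 Bw k * Bw)) by auto.
  simpl. destruct (Nat.ltb_spec j (d (S k))).
  2:{ replace (0 - 0) with 0 by ring. rewrite Rabs_R0. apply Rmult_le_pos; auto.
      apply Rmult_le_pos; auto. apply Rmult_le_pos; auto; apply Rabs_pos. }
  eapply Rle_trans. apply (lipschitz _ (Sb b1 X0 Bw k * Bw) (b2 (S k) (Sb b1 X0 Bw k * Bw))). apply Hdiff; lia.
  { intros c a Hc0 Hr. apply (Hb2 (S k) ltac:(lia) _ c a); auto. }
  - eapply Rle_trans. apply z_bound. intros; apply (fwd_bound L sigma b1 d W' x X0 Bw); auto; lia.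
    apply Rmult_le_compat_l; auto.
  - eapply Rle_trans. apply z_bound. intros; apply (fwd_bound L sigma b1 d W x X0 Bw); auto; lia.
    apply Rmult_le_compat_l; auto.
  - apply Rmult_le_compat_l; auto.
    rewrite (sumR_change1 (d k) (fun i => fwd sigma d W x k i * W (S k) i j)
                                (fun i => fwd sigma d W' x k i * W' (S k) i j) j0); auto.
    2:{ intros. rewrite Heq, Hsame; auto. }
    rewrite Hsame, Hrow.
    replace (sumR (d k) (fun i : nat => fwd sigma d W x k i * W (S k) i j) +
      (fwd sigma d W x k j0 * ((1 - t) * W (S k) j0 j) - fwd sigma d W x k j0 * W (S k) j0 j) -
      sumR (d k) (fun i : nat => fwd sigma d W x k i * W (S k) i j)) with
      (- (t * fwd sigma d W x k j0 * W (S k) j0 j)) by ring.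
    rewrite Rabs_Ropp, !Rabs_mult, (Rabs_right t) by lra.
    apply Rmult_le_compat_l. apply Rmult_le_pos; auto; apply Rabs_pos. auto.
Qed.

Fixpoint Kp (b1 b2 : nat -> R -> R) (X0 Bw : R) (m0 : nat) (K0 : R) (n : nat) : R :=
  match n with O => K0 | S n => b2 (S (m0 + n)) (Sb b1 X0 Bw (m0 + n) * Bw) * (Bw * Kp b1 b2 X0 Bw m0 K0 n) end.

Lemma Kp_nonneg b1 b2 X0 Bw m0 K0 n : 0 <= X0 -> 0 <= Bw -> 0 <= K0 ->
  (forall l S, 0 <= S -> 0 <= b1 l S) -> (forall l S, 0 <= S -> 0 <= b2 l S) ->
  0 <= Kp b1 b2 X0 Bw m0 K0 n.
Proof. intros. induction n; simpl; auto. apply Rmult_le_pos. apply H3.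
  apply Rmult_le_pos; auto. apply Sb_nonneg; auto. apply Rmult_le_pos; auto. Qed.

Lemma prop_iter L sigma b1 b2 d W W' x X0 Bw
  (Hb1_nn : forall l S, 0 <= S -> 0 <= b1 l S)
  (Hb2_nn : forall l S, 0 <= S -> 0 <= b2 l S)
  (Hb1 : forall l, (1 <= l <= L)%nat -> forall S s, 0 <= S -> Rabs s <= S ->
           Rabs (sigma l s) <= b1 l S * Rabs s)
  (Hb2 : forall l, (1 <= l <= L)%nat -> forall S s a, 0 <= S -> Rabs s <= S ->
           (left_deriv (sigma l) s a \/ right_deriv (sigma l) s a) -> Rabs a <= b2 l S)
  (Hdiff : forall l, (1 <= l <= L)%nat -> derivable (sigma l))
  (HX0 : 0 <= X0) (HBw : 0 <= Bw) (Hc : colb L d W Bw) (Hc' : colb L d W' Bw)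
  (Hx : forall i, (i < d O)%nat -> Rabs (x i) <= X0) m0 K0 D0
  (HK0 : 0 <= K0) (HD0 : 0 <= D0)
  (Hbase : forall i, Rabs (fwd sigma d W' x m0 i - fwd sigma d W x m0 i) <= K0 * D0)
  (Heq : forall m, (m0 < m)%nat -> forall i j, W' m i j = W m i j) :
  forall n, (m0 + n <= L)%nat -> forall i,
    Rabs (fwd sigma d W' x (m0 + n) i - fwd sigma d W x (m0 + n) i) <= Kp b1 b2 X0 Bw m0 K0 n * D0.
Proof.
  induction n; intros Hn i. rewrite Nat.add_0_r. simpl. auto.
  replace (m0 + S n)%nat with (S (m0 + n)) by lia. simpl Kp.
  replace (b2 (S (m0 + n)) (Sb b1 X0 Bw (m0 + n) * Bw) * (Bw * Kp b1 b2 X0 Bw m0 K0 n) * D0)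
    with (b2 (S (m0 + n)) (Sb b1 X0 Bw (m0 + n) * Bw) * (Bw * (Kp b1 b2 X0 Bw m0 K0 n * D0))) by ring.
  apply (prop_step L sigma b1 b2 d W W' x X0 Bw); try assumption.
  all: first [ lia | (intros; apply Heq; lia) | (apply Rmult_le_pos; [apply Kp_nonneg; auto| auto]) | (apply IHn; lia) ].
Qed.

Definition natceil (r : R) : nat := Z.to_nat (up r).

Lemma natceil_ge r : r <= INR (natceil r).
Proof. unfold natceil. destruct (archimed r) as [H1 _]. destruct (Z_lt_le_dec (up r) 0).
  - assert (IZR (up r) < 0) by (apply IZR_lt; lia). pose proof (pos_INR (Z.to_nat (up r))). lra.
  - rewrite INR_IZR_INZ, Z2Nat.id by lia. lra. Qed.

Lemma list_delta {A : Type} (P : A -> R -> Prop) (l : list A) :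
  (forall a d d', P a d -> 0 < d' <= d -> P a d') ->
  (forall a, In a l -> exists d, 0 < d /\ P a d) -> exists d, 0 < d /\ forall a, In a l -> P a d.
Proof. intros Hm. induction l; intros H. exists 1. split; [lra| intros a []].
  destruct (H a (or_introl eq_refl)) as [d1 [Hd1 P1]].
  destruct IHl as [d2 [Hd2 P2]]. intros; apply H; right; auto.
  exists (Rmin d1 d2). split. apply Rmin_pos; auto. intros b [<-|Hb].
  apply (Hm _ d1); auto. split. apply Rmin_pos; auto. apply Rmin_l.
  apply (Hm _ d2); auto. split. apply Rmin_pos; auto. apply Rmin_r. Qed.

Lemma count_layer (m n Mk : nat) (w : nat -> nat -> R) (kap Bw p : R) :
  0 < kap -> 1 <= p -> 0 <= Bw -> (m <= Mk)%nat ->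
  (forall j, (j < n)%nat -> kap <= sumR m (fun i => Rabs (w i j))) ->
  (forall i, (i < m)%nat -> pnorm n p (w i) <= Bw) ->
  (n <= natceil (INR Mk * rpow Bw p / rpow (kap / (INR Mk + 1)) p))%nat.
Proof.
  intros Hk Hp HBw HmM Hcol Hrow.
  set (eps := kap / (INR Mk + 1)).
  assert (HM0 : 0 <= INR Mk) by apply pos_INR.
  assert (Heps : 0 < eps) by (unfold eps; apply Rdiv_lt_0_compat; lra).
  assert (HmM' : INR m <= INR Mk) by (apply le_INR; auto).
  assert (Hex : forall j, (j < n)%nat -> exists i, (i < m)%nat /\ eps <= Rabs (w i j)).
  { intros j Hj. apply NNPP. intros Hne.
    assert (Hall : forall i, (i < m)%nat -> Rabs (w i j) <= eps).
    { intros i Hi. destruct (Rle_dec (Rabs (w i j)) eps); auto. exfalso. apply Hne. exists i. split; auto; lra. }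
    assert (sumR m (fun i => Rabs (w i j)) <= INR m * eps).
    { rewrite <- sumR_const. apply sumR_le; auto. }
    specialize (Hcol j Hj). assert (kap <= INR Mk * eps) by nra.
    unfold eps in H0. assert (INR Mk * (kap / (INR Mk + 1)) < kap).
    { apply (Rmult_lt_reg_r (INR Mk + 1)). lra. unfold Rdiv. rewrite Rmult_assoc, (Rmult_assoc kap), Rinv_l by lra. nra. }
    lra. }
  assert (Hpe : 0 < rpow eps p) by (apply rpow_pos; auto).
  assert (H1 : INR n * rpow eps p <= INR Mk * rpow Bw p).
  { rewrite <- sumR_const.
    apply Rle_trans with (sumR n (fun j => sumR m (fun i => rpow (Rabs (w i j)) p))).
    { apply sumR_le. intros j Hj. destruct (Hex j Hj) as [i [Hi He]].
      eapply Rle_trans. apply rpow_le. split; [lra|apply He]. lra.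
      apply (sumR_ge_term m (fun i => rpow (Rabs (w i j)) p)); auto. intros; apply rpow_nonneg. }
    rewrite sumR_swap.
    apply Rle_trans with (INR m * rpow Bw p).
    { rewrite <- sumR_const. apply sumR_le. intros i Hi. rewrite <- pnorm_pow by lra.
      apply rpow_le. split. apply pnorm_nonneg. auto. lra. }
    apply Rmult_le_compat_r; auto. apply rpow_nonneg. }
  apply INR_le. eapply Rle_trans; [| apply natceil_ge]. fold eps.
  apply (Rmult_le_reg_r (rpow eps p)); auto. unfold Rdiv. rewrite Rmult_assoc, Rinv_l; lra.
Qed.

Definition foldD {Y : Type} (f : ((nat -> R) * Y) -> R) (D : list ((nat -> R) * Y)) : R :=
  fold_right (fun xy acc => f xy + acc) 0 D.

Lemma foldD_nonneg {Y} (f : ((nat -> R) * Y) -> R) D : (forall a, In a D -> 0 <= f a) -> 0 <= foldD f D.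
Proof. induction D; simpl; intros H; [lra|]. assert (0 <= f a) by auto. assert (0 <= foldD f D) by (apply IHD; auto). unfold foldD in *. simpl. lra. Qed.

Lemma foldD_ge {Y} (f : ((nat -> R) * Y) -> R) D a : (forall a, In a D -> 0 <= f a) -> In a D -> f a <= foldD f D.
Proof. induction D; simpl; intros H Ha; [tauto|]. unfold foldD in *. simpl.
  destruct Ha as [<-|Ha]. assert (0 <= foldD f D) by (apply foldD_nonneg; auto). unfold foldD in *. lra.
  assert (0 <= f a0) by auto. assert (f a <= fold_right (fun xy acc => f xy + acc) 0 D) by (apply IHD; auto). lra. Qed.

Lemma foldD_diff {Y} (f f' : ((nat -> R) * Y) -> R) D c : (forall a, In a D -> f' a - f a <= c) ->
  foldD f' D - foldD f D <= INR (length D) * c.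
Proof. induction D; intros H. unfold foldD; simpl; lra.
  replace (INR (length (a :: D))) with (INR (length D) + 1) by (simpl length; rewrite S_INR; ring).
  unfold foldD in *; simpl fold_right. assert (fold_right (fun xy acc => f' xy + acc) 0 D -
       fold_right (fun xy acc => f xy + acc) 0 D <= INR (length D) * c) by (apply IHD; intros; apply H; simpl; auto). assert (f' a - f a <= c) by (apply H; simpl; auto). lra. Qed.

Lemma pnorm_ext n p w w' : (forall j, (j < n)%nat -> w j = w' j) -> pnorm n p w = pnorm n p w'.
Proof. intros H. unfold pnorm. f_equal. apply sumR_ext. intros. rewrite H; auto. Qed.

Definition X0f {Y : Type} (d0 : nat) (D : list ((nat -> R) * Y)) : R := foldD (fun xy => maxabs d0 (fst xy)) D.

Definition Qc (b1 b2 : nat -> R -> R) (b3 : R -> R) (L dL : nat) (X0 Bw Se : R) (l0 : nat) : R :=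
  (INR dL * Rabs (b3 Se) + 1) * Kp b1 b2 X0 Bw (S l0) (b2 (S l0) (Sb b1 X0 Bw l0 * Bw)) (L - S l0)
  * (b1 l0 (Sb b1 X0 Bw (l0 - 1) * Bw) * Sb b1 X0 Bw (l0 - 1)).

Lemma Rinv_INR_nonneg n : 0 <= / INR n.
Proof. destruct (Nat.eq_dec n 0). subst. simpl. rewrite Rinv_0. lra.
  apply Rlt_le, Rinv_0_lt_compat, lt_0_INR. lia. Qed.

Lemma key (Y : Type) (L d0 dL : nat) (sigma : nat -> R -> R)
  (b1 b2 : nat -> R -> R) (e : (nat -> R) -> Y -> R) (b3 : R -> R)
  (D : list ((nat -> R) * Y)) (lam p : R)
  (Hb1_nn : forall l S, 0 <= S -> 0 <= b1 l S)
  (Hb2_nn : forall l S, 0 <= S -> 0 <= b2 l S)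
  (Hb1 : forall l, (1 <= l <= L)%nat -> forall S s, 0 <= S -> Rabs s <= S ->
           Rabs (sigma l s) <= b1 l S * Rabs s)
  (Hb2 : forall l, (1 <= l <= L)%nat -> forall S s a, 0 <= S -> Rabs s <= S ->
           (left_deriv (sigma l) s a \/ right_deriv (sigma l) s a) -> Rabs a <= b2 l S)
  (He_nn : forall v y, vec dL v -> 0 <= e v y)
  (He_diff : forall v y, vec dL v -> exists g, frechet dL (fun u => e u y) v g)
  (He_b3 : forall S v y g, vec dL v -> e v y <= S ->
           frechet dL (fun u => e u y) v g -> maxabs dL g <= b3 S)
  (Hdiff : forall l, (1 <= l <= L)%nat -> derivable (sigma l))
  (Hlam : 0 < lam) (Hp : 1 <= p)
  B d W (Hd0 : d O = d0) (HdL : d L = dL)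
  (Hmin : proper_B_local_min L sigma e D lam p B d W)
  l0 j0 (Hl0 : (1 <= l0 <= L - 1)%nat) (Hj0 : (j0 < d l0)%nat) :
  lam <= Qc b1 b2 b3 L dL (X0f d0 D) (Rabs B / lam) (INR (length D) * Rabs B) l0
         * sumR (d (l0 - 1)%nat) (fun i => Rabs (W l0 i j0)).
Proof.
  destruct Hmin as [[eps [Heps Hloc]] [HEB Hprop]].
  set (X0 := X0f d0 D). set (Bw := Rabs B / lam). set (N := length D). set (Se := INR N * Rabs B).
  set (G := INR dL * Rabs (b3 Se) + 1).
  set (F := fun (W : nat -> nat -> nat -> R) => foldD (fun xy => e (netf L sigma d W (fst xy)) (snd xy)) D).
  set (Om := fun W => Omega_out L d W lam p).
  assert (HE : forall W, Eobj L sigma e D lam p d W = / INR N * F W + Om W) by reflexivity.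
  assert (Hvec : forall W x, vec dL (netf L sigma d W x)).
  { intros W0 x i Hi. unfold netf. apply fwd_zero. rewrite HdL; auto. }
  assert (HFpos : forall W, 0 <= F W).
  { intros W0. apply foldD_nonneg. intros. apply He_nn, Hvec. }
  assert (HN : 0 <= / INR N) by apply Rinv_INR_nonneg.
  assert (Hp0 : 0 < p) by lra.
  assert (HOm : 0 <= Om W).
  { unfold Om, Omega_out. apply Rmult_le_pos; [lra|]. apply sumR_nonneg; intros; apply sumR_nonneg; intros; apply pnorm_nonneg. }
  rewrite HE in HEB.
  assert (HFW := HFpos W).
  assert (HNF : 0 <= / INR N * F W) by (apply Rmult_le_pos; auto).
  assert (HBw : 0 <= Bw) by (unfold Bw; apply Rmult_le_pos; [apply Rabs_pos| apply Rlt_le, Rinv_0_lt_compat; auto]).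
  assert (Hrowsum : forall k, (S k <= L)%nat -> sumR (d k) (fun i => pnorm (d (S k)) p (W (S k) i)) <= Bw).
  { intros k Hk.
    apply Rle_trans with (sumR L (fun k => sumR (d k) (fun i => pnorm (d (S k)) p (W (S k) i)))).
    { apply (sumR_ge_term L (fun k => sumR (d k) (fun i => pnorm (d (S k)) p (W (S k) i)))); [|lia].
      intros; apply sumR_nonneg; intros; apply pnorm_nonneg. }
    unfold Bw. apply (Rmult_le_reg_l lam); auto. unfold Rdiv.
    rewrite <- Rmult_assoc, (Rmult_comm lam (Rabs B)), Rmult_assoc, Rinv_r, Rmult_1_r by lra.
    apply Rle_trans with (Om W); [right; reflexivity|]. pose proof (Rle_abs B). lra. }
  assert (Hc : colb L d W Bw).
  { intros k Hk j Hj. eapply Rle_trans; [| apply (Hrowsum k Hk)]. apply sumR_le. intros. apply pnorm_ge; auto. }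
  assert (HX0 : 0 <= X0) by (apply foldD_nonneg; intros; apply maxabs_nonneg).
  assert (Hx : forall xy, In xy D -> forall i, (i < d O)%nat -> Rabs (fst xy i) <= X0).
  { intros xy Hxy i Hi. rewrite Hd0 in Hi. eapply Rle_trans. apply (maxabs_ge d0 (fst xy) i Hi).
    apply (foldD_ge (fun xy => maxabs d0 (fst xy))); auto. intros; apply maxabs_nonneg. }
  set (R0 := pnorm (d (S l0)) p (W (S l0) j0)).
  assert (HR0 : 0 < R0).
  { assert (Hnz : ~ fan_out_zero d W l0 j0).
    { intros Hf. apply (Hprop l0 j0 Hl0 Hj0). right; auto. }
    unfold fan_out_zero in Hnz. apply not_all_ex_not in Hnz. destruct Hnz as [k Hk].
    apply imply_to_and in Hk. destruct Hk as [Hk Hk'].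
    apply Rlt_le_trans with (Rabs (W (S l0) j0 k)). apply Rabs_pos_lt; auto. apply pnorm_ge; auto. }
  assert (HeS : forall xy, In xy D -> e (netf L sigma d W (fst xy)) (snd xy) <= Se).
  { intros xy Hxy. assert (HN0 : (0 < N)%nat). { unfold N. destruct D; simpl in *; [tauto|lia]. }
    assert (HINR : 0 < INR N) by (apply lt_0_INR; auto).
    apply Rle_trans with (F W).
    { apply (foldD_ge (fun xy => e (netf L sigma d W (fst xy)) (snd xy))); [intros; apply He_nn, Hvec | auto]. }
    unfold Se. replace (F W) with (INR N * (/ INR N * F W)) by (field; lra).
    apply Rmult_le_compat_l; [lra|]. pose proof (Rle_abs B). lra. }
  destruct (list_delta (fun xy del => forall h, vec dL h -> maxabs dL h < del ->
      e (fun i => netf L sigma d W (fst xy) i + h i) (snd xy) - e (netf L sigma d W (fst xy)) (snd xy)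
        <= G * maxabs dL h) D) as [del [Hdel HP]].
  { intros a d1 d2 H1 H2 h Hh Hh2. apply H1; auto. lra. }
  { intros xy Hxy. destruct (He_diff (netf L sigma d W (fst xy)) (snd xy) (Hvec _ _)) as [g Hg].
    assert (Hgb := He_b3 Se _ _ g (Hvec _ _) (HeS xy Hxy) Hg).
    destruct (Hg 1 ltac:(lra)) as [del [Hdel Hd]]. exists del. split; auto.
    intros h Hh Hh2. specialize (Hd h Hh Hh2). apply Rabs_le_between' in Hd.
    assert (Hs := sumR_prod_bound dL g h).
    assert (0 <= maxabs dL h) by apply maxabs_nonneg.
    assert (0 <= INR dL) by apply pos_INR.
    assert (maxabs dL g <= Rabs (b3 Se)) by (eapply Rle_trans; [apply Hgb| apply Rle_abs]).
    assert (INR dL * maxabs dL g * maxabs dL h <= INR dL * Rabs (b3 Se) * maxabs dL h).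
    { apply Rmult_le_compat_r; auto. apply Rmult_le_compat_l; auto. }
    unfold G. lra. }

  set (K0 := b2 (S l0) (Sb b1 X0 Bw l0 * Bw)).
  set (Kf := Kp b1 b2 X0 Bw (S l0) K0 (L - S l0)).
  set (A := b1 l0 (Sb b1 X0 Bw (l0 - 1) * Bw) * Sb b1 X0 Bw (l0 - 1)).
  set (c := sumR (d (l0 - 1)%nat) (fun i => Rabs (W l0 i j0))).
  assert (HSl0 : 0 <= Sb b1 X0 Bw l0) by (apply Sb_nonneg; auto).
  assert (HK0 : 0 <= K0) by (apply Hb2_nn; apply Rmult_le_pos; auto).
  assert (HKf : 0 <= Kf) by (apply Kp_nonneg; auto).
  assert (HA : 0 <= A).
  { assert (0 <= Sb b1 X0 Bw (l0 - 1)) by (apply Sb_nonneg; auto).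
    apply Rmult_le_pos; auto. apply Hb1_nn. apply Rmult_le_pos; auto. }
  assert (Hcn : 0 <= c) by (apply sumR_nonneg; intros; apply Rabs_pos).
  assert (HG : 0 < G).
  { unfold G. assert (0 <= INR dL) by apply pos_INR. assert (0 <= Rabs (b3 Se)) by apply Rabs_pos. nra. }
  assert (HQ : Qc b1 b2 b3 L dL X0 Bw Se l0 = G * Kf * A) by reflexivity.
  fold X0 Bw. fold N Se. fold c. rewrite HQ.
  set (t := Rmin (1/2) (Rmin (eps / (R0 + 1)) (del / (Kf * Sb b1 X0 Bw l0 * R0 + 1)))).
  assert (HKSR : 0 <= Kf * Sb b1 X0 Bw l0 * R0) by (apply Rmult_le_pos; [apply Rmult_le_pos|]; lra).
  assert (Ht0 : 0 < t).
  { unfold t. apply Rmin_pos. lra. apply Rmin_pos; apply Rdiv_lt_0_compat; lra. }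
  assert (Ht1 : t <= 1/2) by apply Rmin_l.
  assert (HtR : t * R0 < eps).
  { assert (t <= eps / (R0 + 1)) by (eapply Rle_trans; [apply Rmin_r| apply Rmin_l]).
    assert (t * (R0 + 1) <= eps).
    { replace eps with (eps / (R0+1) * (R0+1)) by (field; lra). apply Rmult_le_compat_r; lra. } nra. }
  assert (Htd : t * (Kf * Sb b1 X0 Bw l0 * R0) < del).
  { assert (t <= del / (Kf * Sb b1 X0 Bw l0 * R0 + 1)) by (eapply Rle_trans; [apply Rmin_r| apply Rmin_r]).
    assert (t * (Kf * Sb b1 X0 Bw l0 * R0 + 1) <= del).
    { replace del with (del / (Kf * Sb b1 X0 Bw l0 * R0 + 1) * (Kf * Sb b1 X0 Bw l0 * R0 + 1)) by (field; lra).
      apply Rmult_le_compat_r; lra. } nra. }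
  set (W' := fun l i j => if andb (Nat.eqb l (S l0)) (Nat.eqb i j0) then (1 - t) * W l i j else W l i j).
  assert (HW'abs : forall l i j, Rabs (W' l i j) <= Rabs (W l i j)).
  { intros. unfold W'. destruct (andb _ _). rewrite Rabs_mult, (Rabs_right (1 - t)) by lra.
    assert (0 <= Rabs (W l i j)) by apply Rabs_pos. nra. lra. }
  assert (Hc' : colb L d W' Bw).
  { intros k Hk j Hj. eapply Rle_trans; [| apply (Hc k Hk j Hj)]. apply sumR_le; intros; auto. }
  assert (HRge : forall j, (j < d (S l0))%nat -> Rabs (W (S l0) j0 j) <= R0).
  { intros. apply pnorm_ge; auto. }
  assert (Hclose : forall l i j, (1 <= l <= L)%nat -> (i < d (l - 1))%nat -> (j < d l)%nat ->
                      Rabs (W' l i j - W l i j) < eps).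
  { intros l i j Hl Hi Hj. unfold W'. destruct (Nat.eqb_spec l (S l0)); destruct (Nat.eqb_spec i j0); simpl.
    - subst. replace ((1 - t) * W (S l0) j0 j - W (S l0) j0 j) with (- (t * W (S l0) j0 j)) by ring.
      rewrite Rabs_Ropp, Rabs_mult, (Rabs_right t) by lra.
      assert (Rabs (W (S l0) j0 j) <= R0) by auto. nra.
    - replace (W l i j - W l i j) with 0 by ring. rewrite Rabs_R0; lra.
    - replace (W l i j - W l i j) with 0 by ring. rewrite Rabs_R0; lra.
    - replace (W l i j - W l i j) with 0 by ring. rewrite Rabs_R0; lra. }
  assert (HOm' : Om W' = Om W - lam * t * R0).
  { change (lam * sumR L (fun k => sumR (d k) (fun i => pnorm (d (S k)) p (W' (S k) i))) =
            lam * sumR L (fun k => sumR (d k) (fun i => pnorm (d (S k)) p (W (S k) i))) - lam * t * R0).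
    rewrite (sumR_change1 L (fun k => sumR (d k) (fun i => pnorm (d (S k)) p (W (S k) i)))
                             (fun k => sumR (d k) (fun i => pnorm (d (S k)) p (W' (S k) i))) l0); [| |lia].
    2:{ intros k Hk Hne. apply sumR_ext. intros i Hi. apply pnorm_ext. intros j Hj. unfold W'.
        destruct (Nat.eqb_spec (S k) (S l0)); [lia|reflexivity]. }
    rewrite (sumR_change1 (d l0) (fun i => pnorm (d (S l0)) p (W (S l0) i))
                             (fun i => pnorm (d (S l0)) p (W' (S l0) i)) j0); auto.
    2:{ intros i Hi Hne. apply pnorm_ext. intros j Hj. unfold W'.
        rewrite Nat.eqb_refl. destruct (Nat.eqb_spec i j0); [lia|reflexivity]. }
    assert (Hpn : pnorm (d (S l0)) p (W' (S l0) j0) = (1 - t) * R0).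
    { unfold R0. rewrite <- pnorm_scale by lra. apply pnorm_ext. intros j Hj. unfold W'.
      rewrite !Nat.eqb_refl. reflexivity. }
    rewrite Hpn. fold R0. ring. }
  assert (Hdata : forall xy, In xy D ->
     e (netf L sigma d W' (fst xy)) (snd xy) - e (netf L sigma d W (fst xy)) (snd xy)
       <= G * (Kf * (t * (A * c) * R0))).
  { intros xy Hxy. set (x := fst xy).
    assert (Hxb := Hx xy Hxy). fold x in Hxb.
    assert (Hsame : forall i, fwd sigma d W' x l0 i = fwd sigma d W x l0 i).
    { apply fwd_dep. intros m Hm i j. unfold W'. destruct (Nat.eqb_spec m (S l0)); [lia|reflexivity]. }
    assert (Hfirst := prop_first L sigma b1 b2 d W W' x X0 Bw Hb1_nn Hb2_nn Hb1 Hb2 Hdiff HX0 HBw Hc Hc' Hxb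
                        l0 j0 t R0 ltac:(lia) Hj0 ltac:(lra)).
    assert (Hf : forall j, Rabs (fwd sigma d W' x (S l0) j - fwd sigma d W x (S l0) j)
                  <= K0 * (t * Rabs (fwd sigma d W x l0 j0) * R0)).
    { apply Hfirst.
      - intros i j Hne. unfold W'. rewrite Nat.eqb_refl. destruct (Nat.eqb_spec i j0); [lia|reflexivity].
      - intros j. unfold W'. rewrite !Nat.eqb_refl. reflexivity.
      - lra.
      - exact HRge.
      - exact Hsame. }
    assert (HxA : Rabs (fwd sigma d W x l0 j0) <= A * c).
    { destruct l0 as [|k0]; [lia|]. simpl fwd. replace (S k0 - 1)%nat with k0 in * by lia.
      destruct (Nat.ltb_spec j0 (d (S k0))); [|lia].
      assert (Hceq : c = sumR (d k0) (fun i => Rabs (W (S k0) i j0))).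
      { unfold c. replace (S k0 - 1)%nat with k0 by lia. reflexivity. }
      rewrite Hceq.
      assert (HSk : 0 <= Sb b1 X0 Bw k0) by (apply Sb_nonneg; auto).
      assert (Hz : Rabs (sumR (d k0) (fun i => fwd sigma d W x k0 i * W (S k0) i j0)) <= Sb b1 X0 Bw k0 * sumR (d k0) (fun i => Rabs (W (S k0) i j0))).
      { apply z_bound. intros; apply (fwd_bound L sigma b1 d W x X0 Bw); auto; lia. }
      assert (Hcb : sumR (d k0) (fun i => Rabs (W (S k0) i j0)) <= Bw) by (apply Hc; auto; lia).
      set (z := sumR (d k0) (fun i => fwd sigma d W x k0 i * W (S k0) i j0)) in *.
      assert (Hzb : Rabs z <= Sb b1 X0 Bw k0 * Bw) by (eapply Rle_trans; [apply Hz| apply Rmult_le_compat_l; auto]).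
      eapply Rle_trans. apply (Hb1 (S k0) ltac:(lia) (Sb b1 X0 Bw k0 * Bw) z); [apply Rmult_le_pos; auto | exact Hzb].
      unfold A. replace (S k0 - 1)%nat with k0 by lia. rewrite Rmult_assoc.
      apply Rmult_le_compat_l. apply Hb1_nn. apply Rmult_le_pos; auto. exact Hz. }
    assert (HxS : Rabs (fwd sigma d W x l0 j0) <= Sb b1 X0 Bw l0).
    { apply (fwd_bound L sigma b1 d W x X0 Bw); auto; lia. }
    assert (HD0 : 0 <= t * Rabs (fwd sigma d W x l0 j0) * R0).
    { apply Rmult_le_pos; [apply Rmult_le_pos|]; try lra. apply Rabs_pos. }
    assert (Hit := prop_iter L sigma b1 b2 d W W' x X0 Bw Hb1_nn Hb2_nn Hb1 Hb2 Hdiff HX0 HBw Hc Hc' Hxb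
                     (S l0) K0 _ HK0 HD0 Hf).
    assert (Hit2 : forall i, Rabs (netf L sigma d W' x i - netf L sigma d W x i)
                         <= Kf * (t * Rabs (fwd sigma d W x l0 j0) * R0)).
    { intros i. unfold netf.
      assert (Heqm : forall m, (S l0 < m)%nat -> forall i j, W' m i j = W m i j).
      { intros m Hm i' j'. unfold W'. destruct (Nat.eqb_spec m (S l0)); [lia|reflexivity]. }
      assert (Heqn : (S l0 + (L - S l0))%nat = L) by lia.
      pose proof (Hit Heqm (L - S l0)%nat ltac:(lia) i) as Hi. rewrite Heqn in Hi. exact Hi. }
    set (v := netf L sigma d W x). set (v' := netf L sigma d W' x).
    set (h := fun i => v' i - v i).
    assert (Hh : vec dL h). { intros i Hi. unfold h, v, v'. rewrite (Hvec W' x i Hi), (Hvec W x i Hi). ring. }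
    assert (Hmh : maxabs dL h <= Kf * (t * Rabs (fwd sigma d W x l0 j0) * R0)).
    { apply maxabs_le. apply Rmult_le_pos; auto. intros i _. apply Hit2. }
    assert (Hmh2 : maxabs dL h < del).
    { eapply Rle_lt_trans; [apply Hmh|]. eapply Rle_lt_trans; [|apply Htd].
      assert (0 <= t * R0) by nra.
      replace (t * (Kf * Sb b1 X0 Bw l0 * R0)) with (Kf * (t * Sb b1 X0 Bw l0 * R0)) by ring.
      apply Rmult_le_compat_l; auto. nra. }
    assert (HPx := HP xy Hxy h Hh Hmh2).
    assert (Hv' : (fun i => netf L sigma d W (fst xy) i + h i) = v').
    { apply functional_extensionality. intros i. unfold h, v. fold x. ring. }
    rewrite Hv' in HPx. fold x v. fold v in HPx.
    eapply Rle_trans. apply HPx. apply Rmult_le_compat_l; [lra|].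
    eapply Rle_trans. apply Hmh. apply Rmult_le_compat_l; auto.
    apply Rmult_le_compat_r; [lra|]. apply Rmult_le_compat_l; lra. }
  assert (Hl := Hloc W' Hclose). rewrite !HE, HOm' in Hl.
  assert (HFd := foldD_diff (fun xy => e (netf L sigma d W (fst xy)) (snd xy))
                            (fun xy => e (netf L sigma d W' (fst xy)) (snd xy)) D _ Hdata).
  fold N in HFd. change (F W' - F W <= INR N * (G * (Kf * (t * (A * c) * R0)))) in HFd.
  set (c0 := G * (Kf * (t * (A * c) * R0))).
  assert (Hc0 : 0 <= c0).
  { unfold c0. apply Rmult_le_pos; [lra|]. apply Rmult_le_pos; auto.
    apply Rmult_le_pos; [apply Rmult_le_pos|]; try lra. apply Rmult_le_pos; auto. }
  assert (HNN : / INR N * (INR N * c0) <= c0).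
  { destruct (Nat.eq_dec N 0) as [E|E]. rewrite E. simpl. rewrite Rinv_0. lra.
    rewrite <- Rmult_assoc, Rinv_l, Rmult_1_l. lra. apply not_0_INR; auto. }
  assert (lam * t * R0 <= c0).
  { assert (/ INR N * (F W' - F W) <= / INR N * (INR N * c0)) by (apply Rmult_le_compat_l; auto).
    nra. }
  unfold c0 in H.
  apply (Rmult_le_reg_r (t * R0)). nra.
  nra.
Qed.

Lemma rowbound (Y : Type) (L dL : nat) (sigma : nat -> R -> R) (e : (nat -> R) -> Y -> R)
  (D : list ((nat -> R) * Y)) (lam p B : R) d W
  (He_nn : forall v y, vec dL v -> 0 <= e v y) (Hlam : 0 < lam) (HdL : d L = dL)
  (HEB : Eobj L sigma e D lam p d W <= B) :
  forall k, (S k <= L)%nat -> forall i, (i < d k)%nat -> pnorm (d (S k)) p (W (S k) i) <= Rabs B / lam.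
Proof.
  intros k Hk i Hi.
  assert (HF : 0 <= / INR (length D) * foldD (fun xy => e (netf L sigma d W (fst xy)) (snd xy)) D).
  { apply Rmult_le_pos. apply Rinv_INR_nonneg. apply foldD_nonneg. intros. apply He_nn.
    intros j Hj. unfold netf. apply fwd_zero. rewrite HdL; auto. }
  assert (HE : Eobj L sigma e D lam p d W = / INR (length D) * foldD (fun xy => e (netf L sigma d W (fst xy)) (snd xy)) D
     + lam * sumR L (fun k => sumR (d k) (fun i => pnorm (d (S k)) p (W (S k) i)))) by reflexivity.
  apply Rle_trans with (sumR (d k) (fun i => pnorm (d (S k)) p (W (S k) i))).
  { apply (sumR_ge_term (d k) (fun i => pnorm (d (S k)) p (W (S k) i))); auto. intros; apply pnorm_nonneg. }
  apply Rle_trans with (sumR L (fun k => sumR (d k) (fun i => pnorm (d (S k)) p (W (S k) i)))).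
  { apply (sumR_ge_term L (fun k => sumR (d k) (fun i => pnorm (d (S k)) p (W (S k) i)))); [|lia].
    intros; apply sumR_nonneg; intros; apply pnorm_nonneg. }
  apply (Rmult_le_reg_l lam); auto. unfold Rdiv.
  rewrite <- Rmult_assoc, (Rmult_comm lam (Rabs B)), Rmult_assoc, Rinv_r, Rmult_1_r by lra.
  pose proof (Rle_abs B). lra.
Qed.

Fixpoint Mseq (d0 : nat) (kap : nat -> R) (Bw p : R) (k : nat) : nat :=
  match k with
  | O => d0
  | S k => natceil (INR (Mseq d0 kap Bw p k) * rpow Bw p / rpow (kap (S k) / (INR (Mseq d0 kap Bw p k) + 1)) p)
  end.

Fixpoint msum (f : nat -> nat) (n : nat) : nat := match n with O => O | S n => (msum f n + f n)%nat end.

Lemma msum_ge f n l : (l < n)%nat -> (f l <= msum f n)%nat.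
Proof. induction n; simpl; intros; [lia|]. destruct (Nat.eq_dec l n). subst; lia. specialize (IHn ltac:(lia)). lia. Qed.

Theorem lemma3 (Y : Type) (L d0 dL : nat) (sigma : nat -> R -> R)
  (b1 b2 : nat -> R -> R) (e : (nat -> R) -> Y -> R) (b3 : R -> R)
  (D : list ((nat -> R) * Y)) (lam p : R)
  (* standing assumptions on the activations *)
  (Hsig_ld : forall l, (1 <= l <= L)%nat -> forall s, exists a, left_deriv (sigma l) s a)
  (Hsig_rd : forall l, (1 <= l <= L)%nat -> forall s, exists a, right_deriv (sigma l) s a)
  (Hb1_nn : forall l S, 0 <= S -> 0 <= b1 l S)
  (Hb2_nn : forall l S, 0 <= S -> 0 <= b2 l S)
  (Hb1 : forall l, (1 <= l <= L)%nat -> forall S s, 0 <= S -> Rabs s <= S ->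
           Rabs (sigma l s) <= b1 l S * Rabs s)
  (Hb2 : forall l, (1 <= l <= L)%nat -> forall S s a, 0 <= S -> Rabs s <= S ->
           (left_deriv (sigma l) s a \/ right_deriv (sigma l) s a) -> Rabs a <= b2 l S)
  (* standing assumptions on the loss *)
  (He_nn : forall v y, vec dL v -> 0 <= e v y)
  (He_diff : forall v y, vec dL v -> exists g, frechet dL (fun u => e u y) v g)
  (He_b3 : forall S v y g, vec dL v -> e v y <= S ->
           frechet dL (fun u => e u y) v g -> maxabs dL g <= b3 S)
  (* additional assumptions *)
  (Hdiff : forall l, (1 <= l <= L)%nat -> derivable (sigma l))
  (Hlam : 0 < lam) (Hp : 1 <= p) :
  forall B : R, exists M : nat,
    forall (d : nat -> nat) (W : nat -> nat -> nat -> R),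
      d O = d0 -> d L = dL ->
      proper_B_local_min L sigma e D lam p B d W ->
      forall l, (1 <= l <= L - 1)%nat -> (d l <= M)%nat.
Proof.
  intros B.
  set (Bw := Rabs B / lam).
  set (kap := fun l => lam / (Rabs (Qc b1 b2 b3 L dL (X0f d0 D) Bw (INR (length D) * Rabs B) l) + 1)).
  exists (msum (Mseq d0 kap Bw p) L).
  intros d W Hd0 HdL Hmin.
  assert (HBw : 0 <= Bw) by (unfold Bw; apply Rmult_le_pos; [apply Rabs_pos| apply Rlt_le, Rinv_0_lt_compat; auto]).
  assert (Hall : forall l, (l <= L - 1)%nat -> (d l <= Mseq d0 kap Bw p l)%nat).
  { induction l; intros Hl. simpl; lia.
    simpl Mseq. apply (count_layer (d l) (d (S l)) _ (fun i j => W (S l) i j) (kap (S l)) Bw p); auto.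
    - unfold kap. apply Rdiv_lt_0_compat; auto. pose proof (Rabs_pos (Qc b1 b2 b3 L dL (X0f d0 D) Bw (INR (length D) * Rabs B) (S l))). lra.
    - apply IHl; lia.
    - intros j Hj.
      assert (Hk := key Y L d0 dL sigma b1 b2 e b3 D lam p Hb1_nn Hb2_nn Hb1 Hb2 He_nn He_diff He_b3 Hdiff Hlam Hp
                 B d W Hd0 HdL Hmin (S l) j ltac:(lia) Hj).
      replace (S l - 1)%nat with l in Hk by lia. fold Bw in Hk.
      set (Q := Qc b1 b2 b3 L dL (X0f d0 D) Bw (INR (length D) * Rabs B) (S l)) in *.
      set (c := sumR (d l) (fun i => Rabs (W (S l) i j))) in *.
      assert (0 <= c) by (apply sumR_nonneg; intros; apply Rabs_pos).
      assert (Q * c <= Rabs Q * c) by (apply Rmult_le_compat_r; auto; apply Rle_abs).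
      assert (HQ : 0 < Rabs Q + 1) by (pose proof (Rabs_pos Q); lra).
      unfold kap. fold Q. apply (Rmult_le_reg_l (Rabs Q + 1)); auto.
      unfold Rdiv. rewrite <- Rmult_assoc, (Rmult_comm _ lam), Rmult_assoc, Rinv_r, Rmult_1_r by lra. nra.
    - intros i Hi. destruct Hmin as [_ [HEB _]].
      apply (rowbound Y L dL sigma e D lam p B d W He_nn Hlam HdL HEB); auto. lia. }
  intros l Hl. eapply Nat.le_trans. apply Hall; lia. apply msum_ge. lia.
Qed.
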